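(* Let $k$ be a field, $(X,\leq)$ a locally finite preordered set and $C=IC(X)$. Then every indecomposable injective right $C$-comodule is isomorphic to $E_x$ for some $x\in X$.
   Context: $(X,\leq)$ is a reflexive transitive relation with all intervals $[x,y]$ finite. $IC(X)$ has $k$-basis $\{e_{x,y}\mid x\leq y\}$, $\Delta(e_{x,y})=\sum_{x\leq z\leq y}e_{x,z}\otimes e_{z,y}$, $\varepsilon(e_{x,y})=\delta_{x,y}$. For $x\in X$, $E_x=\operatorname{span}\{e_{x,y}\mid y\in X,\ x\leq y\}$, a right $C$-subcomodule of $C$. *)

(* Defs.v *)
From HB Require Import structures.
From mathcomp Require Import all_boot all_order all_algebra.

Set Implicit Arguments.
Unset Strict Implicit.
Unset Printing Implicit Defensive.

Import GRing.Theory.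
Local Open Scope ring_scope.

(* Incidence coalgebra C = IC(X) of a preordered set (X, le) over a field k.
   C has k-basis e_{x,y} (x <= y).  For a k-vector space M we identify
   M (x) C with the finitely supported M-valued families indexed by the
   basis {(a,b) | a <= b}: t = sum_{a<=b} t(a,b) (x) e_{a,b}.
   A right coaction rho : M -> M (x) C is thus given by
   rho : M -> X -> X -> M, where rho m a b is the coefficient of e_{a,b}. *)

Section IncidenceComodules.
Variables (k : fieldType) (X : eqType) (le : rel X).

Definition preorder_rel : Prop := reflexive le /\ transitive le.

Definition locally_finite : Prop :=
  forall x y, exists s : seq X, forall z, le x z -> le z y -> z \in s.

(* (M, rho) is a right C-comodule:
   - rho linear,
   - rho m lies in M (x) C: supported on {(a,b) | a <= b}, finitely,
   - counit: (id (x) eps) (rho m) = sum_a rho m a a = m,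
   - coassociativity: (rho (x) id) rho = (id (x) Delta) rho, compared on
     the basis e_{a,b} (x) e_{c,d} (a<=b, c<=d) of C (x) C, where
     Delta(e_{a,d}) = sum_{a<=b<=d} e_{a,b} (x) e_{b,d}. *)
Definition is_right_comodule (M : lmodType k) (rho : M -> X -> X -> M) : Prop :=
  [/\ (forall (c : k) (m n : M) a b, rho (c *: m + n) a b = c *: rho m a b + rho n a b),
      (forall m a b, rho m a b != 0 -> le a b),
      (forall m, exists s : seq (X * X), forall a b, rho m a b != 0 -> (a, b) \in s),
      (forall m, exists s : seq X,
          [/\ uniq s, (forall a, rho m a a != 0 -> a \in s) & m = \sum_(a <- s) rho m a a]) &
      (forall m a b c d, le a b -> le c d ->
          rho (rho m c d) a b = if b == c then rho m a d else 0)].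

Definition comod_morph (M N : lmodType k) (rhoM : M -> X -> X -> M)
    (rhoN : N -> X -> X -> N) (f : M -> N) : Prop :=
  (forall (c : k) (m n : M), f (c *: m + n) = c *: f m + f n) /\
  (forall m a b, f (rhoM m a b) = rhoN (f m) a b).

Definition injective_comodule (E : lmodType k) (rhoE : E -> X -> X -> E) : Prop :=
  forall (A B : lmodType k) (rhoA : A -> X -> X -> A) (rhoB : B -> X -> X -> B),
    is_right_comodule rhoA -> is_right_comodule rhoB ->
    forall (f : A -> B) (g : A -> E),
      comod_morph rhoA rhoB f -> injective f -> comod_morph rhoA rhoE g ->
      exists h : B -> E, comod_morph rhoB rhoE h /\ (forall x, h (f x) = g x).

Definition subcomodule (M : lmodType k) (rho : M -> X -> X -> M) (N : M -> Prop) : Prop :=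
  [/\ N 0, (forall (c : k) m n, N m -> N n -> N (c *: m + n)) &
      (forall m a b, N m -> N (rho m a b))].

Definition indecomposable_comodule (M : lmodType k) (rho : M -> X -> X -> M) : Prop :=
  (exists m : M, m != 0) /\
  forall N1 N2 : M -> Prop, subcomodule rho N1 -> subcomodule rho N2 ->
    (forall m, exists m1 m2, [/\ N1 m1, N2 m2 & m = m1 + m2]) ->
    (forall m, N1 m -> N2 m -> m = 0) ->
    (forall m, N1 m -> m = 0) \/ (forall m, N2 m -> m = 0).

(* Elements of C are represented by their coefficient functions c u v
   (coefficient of e_{u,v}).  E_x = span{e_{x,y} | x <= y}: *)
Definition in_Ex (x : X) (f : X -> X -> k) : Prop :=
  exists s : seq X, forall u v, f u v != 0 -> [&& u == x, le x v & v \in s].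

(* the right coaction Delta of C, coefficient of (_) (x) e_{a,b}:
   Delta(sum c_{u,w} e_{u,w}) = sum_{u<=a<=b} c_{u,b} e_{u,a} (x) e_{a,b} *)
Definition coaction_C (c : X -> X -> k) (a b : X) : X -> X -> k :=
  fun u v => if [&& v == a, le u a & le a b] then c u b else 0.

(* (M, rho) is isomorphic, as a right C-comodule, to E_x: a comodule map
   phi : M -> C that is injective with image exactly E_x. *)
Definition iso_to_Ex (M : lmodType k) (rho : M -> X -> X -> M) (x : X) : Prop :=
  exists phi : M -> X -> X -> k,
    [/\ (forall (c : k) (m n : M) u v, phi (c *: m + n) u v = c * phi m u v + phi n u v),
        injective phi,
        (forall m, in_Ex x (phi m)),
        (forall f, in_Ex x f -> exists m, phi m = f) &
        (forall m a b, phi (rho m a b) = coaction_C (phi m) a b)].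

End IncidenceComodules.

(* Main.v *)
Require Import Defs.
From HB Require Import structures.
From mathcomp Require Import all_boot all_order all_algebra.
From mathcomp Require Import boolp classical_sets functions.
Set Implicit Arguments.
Unset Strict Implicit.
Unset Printing Implicit Defensive.
Import GRing.Theory.
Local Open Scope ring_scope.

Section FS.
Variables (k : fieldType) (X : eqType) (P : X -> Prop).

Lemma fctD (u w : X -> k^o) v : (u + w) v = u v + w v. Proof. by []. Qed.
Lemma fctZ a (u : X -> k^o) v : (a *: u) v = a * u v. Proof. by []. Qed.
Lemma fct0 v : (0 : X -> k^o) v = 0. Proof. by []. Qed.

Definition fsp : {pred (X -> k^o)} :=
  fun f => `[< exists s : seq X, forall v, f v != 0 -> P v /\ v \in s >].

Lemma fsp_closed : subsemimod_closed fsp.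
Proof.
split; first split.
- rewrite inE; exists [::] => v; by rewrite eqxx.
- move=> u w; rewrite !inE => -[s1 h1] [s2 h2].
  exists (s1 ++ s2) => v; rewrite fctD.
  have [/eqP u0|/h1[? ?]] := boolP (u v == 0).
  + rewrite u0 add0r => /h2[? ?]; split => //; by rewrite mem_cat orbC; apply/orP; left.
  + by move=> _; split=> //; rewrite mem_cat; apply/orP; left.
- move=> a u; rewrite !inE => -[s h]; exists s => v.
  rewrite fctZ => H; apply: h; apply: contraNneq H => ->.
  by rewrite mulr0.
Qed.

HB.instance Definition _ := GRing.isSubmodClosed.Build k (X -> k^o) fsp fsp_closed.

Record FS := MkFS { fsval :> X -> k^o; fsvalP : fsval \in fsp }.
HB.instance Definition _ := [isSub for fsval].
HB.instance Definition _ := [Choice of FS by <:].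
HB.instance Definition _ := [SubChoice_isSubLmodule of FS by <:].


Lemma FSvalD (u w : FS) : val (u + w) = val u + val w. Proof. by []. Qed.
Lemma FSvalZ a (u : FS) : val (a *: u) = a *: val u. Proof. by []. Qed.
Lemma FSval0 : val (0 : FS) = 0. Proof. by []. Qed.
Lemma FSval_sum (I : Type) (r : seq I) (F : I -> FS) : val (\sum_(i <- r) F i) = \sum_(i <- r) val (F i).
Proof. elim: r => [|i r IH]; by rewrite ?big_nil ?big_cons // FSvalD IH. Qed.
Lemma fct_sum (I : Type) (r : seq I) (F : I -> X -> k^o) v : (\sum_(i <- r) F i) v = \sum_(i <- r) F i v.
Proof. elim: r => [|i r IH]; by rewrite ?big_nil ?big_cons // fctD IH. Qed.
Lemma FS_support (m : FS) : exists s : seq X, forall v, val m v != 0 -> P v /\ v \in s.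
Proof. by have := fsvalP m; rewrite inE. Qed.
End FS.

Lemma sum_delta (V : nmodType) (I : eqType) (L : seq I) (a : I) (F : I -> V) :
  uniq L -> \sum_(c <- L) (if c == a then F c else 0) = if a \in L then F a else 0.
Proof.
elim: L => [|c L IH] /=; first by rewrite big_nil.
move=> /andP[cL uL]; rewrite big_cons IH // in_cons.
case: (c =P a) => [<-|ca] /=.
  by rewrite eqxx (negbTE cL) addr0.
rewrite add0r; case: (a =P c) => //= ac; by case: ca.
Qed.

Section Model.
Variables (k : fieldType) (X : eqType) (le : rel X) (x : X) (P : X -> Prop).
Hypotheses (leR : reflexive le) (leT : transitive le) (lf : locally_finite le).
Hypotheses (Pconv : forall a b, P b -> le x a -> le a b -> P a) (Px : forall v, P v -> le x v).

Local Notation M := (@FS k X P).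

Definition rhoFf (m : M) a b : X -> k^o :=
  fun v => if [&& v == a, le x a & le a b] then val m b else 0.

Lemma rhoFf_in m a b : rhoFf m a b \in @fsp k X P.
Proof.
rewrite inE; exists [:: a] => v; rewrite /rhoFf.
case: ifP; last by rewrite eqxx.
move=> /and3P[/eqP -> xa ab] H; split; last by rewrite mem_seq1.
have [s /(_ b H) [Pb _]] := FS_support m.
exact: Pconv Pb xa ab.
Qed.

Definition rhoF (m : M) a b : M := MkFS (rhoFf_in m a b).

Lemma rhoF_val m a b v : val (rhoF m a b) v =
  if [&& v == a, le x a & le a b] then val m b else 0.
Proof. by []. Qed.

Lemma interval_seq (s : seq X) : exists S : seq (X * X),
  forall b, b \in s -> forall a, le x a -> le a b -> (a, b) \in S.
Proof.
elim: s => [|b s [S HS]]; first by exists [::].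
have [I HI] := lf x b.
exists ([seq (a, b) | a <- I] ++ S) => b' /[!in_cons] /orP[/eqP ->|b's] a xa ab.
  by rewrite mem_cat; apply/orP; left; apply/mapP; exists a => //; apply: HI.
by rewrite mem_cat; apply/orP; right; apply: HS.
Qed.

Lemma FS_comod : is_right_comodule le rhoF.
Proof.
split.
- move=> c m n a b; apply: val_inj; apply/funext => v.
  rewrite FSvalD FSvalZ fctD fctZ !rhoF_val FSvalD FSvalZ fctD fctZ.
  by case: ifP => //; rewrite mulr0 addr0.
- move=> m a b; apply: contraNT => nab; apply/eqP; apply: val_inj; apply/funext => v.
  by rewrite rhoF_val (negbTE nab) !andbF.
- move=> m; have [s Hs] := FS_support m; have [S HS] := interval_seq s.
  exists S => a b; apply: contraNT => nS; apply/eqP; apply: val_inj; apply/funext => v.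
  rewrite rhoF_val FSval0 fct0; case: ifP => // /and3P[_ xa ab].
  apply/eqP; apply: contraNT nS => H; apply: HS => //.
  by have [] := Hs b H.
- move=> m; have [s Hs] := FS_support m.
  exists (undup s); split.
  + exact: undup_uniq.
  + move=> a; apply: contraNT; rewrite mem_undup => nas; apply/eqP; apply: val_inj.
    apply/funext => v; rewrite rhoF_val FSval0 fct0; case: ifP => // _.
    apply/eqP; apply: contraNT nas => H; by have [] := Hs a H.
  + apply: val_inj; apply/funext => v; rewrite FSval_sum fct_sum.
    under eq_bigr => a _ do rewrite rhoF_val leR andbT.
    have -> : \sum_(a <- undup s) (if (v == a) && le x a then val m a else 0 : k^o)
       = \sum_(a <- undup s) (if a == v then (if le x v then val m v else 0) else 0).
      apply: eq_bigr => a _; rewrite eq_sym; case: (a =P v) => [->|] //=.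
    rewrite sum_delta ?undup_uniq // mem_undup.
    have [H|/negPn/eqP ->] := boolP (val m v != 0); last by case: ifP => //; case: ifP.
    have [Pv vs] := Hs v H; by rewrite vs Px.
- move=> m a b c d ab cd; apply: val_inj; apply/funext => v.
  rewrite !rhoF_val; case: (b =P c) => [bc|bc]; first subst c.
    rewrite ?rhoF_val ?eqxx /=.
    case: (v =P a) => //= _; case xa: (le x a) => //=; rewrite ab /=.
    by rewrite (leT xa ab) (leT ab cd) /= ; move: cd; rewrite /is_true => ->.
  by rewrite FSval0 fct0; case: ifP.
Qed.

End Model.

Lemma count_lt (T : eqType) (P1 P2 : pred T) (s : seq T) y :
  (forall d, P1 d -> P2 d) -> y \in s -> P2 y -> ~~ P1 y -> (count P1 s < count P2 s)%N.
Proof.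
move=> sub; elim: s => [|z s IH] //= /[!in_cons] /orP[/eqP <-|ys] P2y nP1y.
  rewrite P2y (negbTE nP1y) add0n add1n ltnS.
  by apply: sub_count => d; apply: sub.
have := IH ys P2y nP1y; case: (P1 z) (sub z) => [/(_ isT) ->|_] H.
  by rewrite !add1n ltnS.
rewrite add0n; apply: leq_trans H _; apply: leq_addl.
Qed.

Section Main.
Variables (k : fieldType) (X : eqType) (le : rel X).
Hypotheses (leR : reflexive le) (leT : transitive le) (lf : locally_finite le).
Variables (E : lmodType k) (rho : E -> X -> X -> E).
Hypothesis Hc : is_right_comodule le rho.

Lemma rhoDZ c m n a b : rho (c *: m + n) a b = c *: rho m a b + rho n a b.
Proof. by case: Hc. Qed.
Lemma rho0 a b : rho 0 a b = 0.
Proof.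
have H := rhoDZ 1 0 0 a b; rewrite !scale1r addr0 in H.
by apply: (@addrI _ (rho 0 a b)); rewrite addr0 -H.
Qed.
Lemma rhoD m n a b : rho (m + n) a b = rho m a b + rho n a b.
Proof. by have := rhoDZ 1 m n a b; rewrite !scale1r. Qed.
Lemma rhoZ c m a b : rho (c *: m) a b = c *: rho m a b.
Proof. by have := rhoDZ c m 0 a b; rewrite !addr0 rho0 addr0. Qed.
Lemma rhoN m a b : rho (- m) a b = - rho m a b.
Proof. by rewrite -scaleN1r rhoZ scaleN1r. Qed.
Lemma rhoB m n a b : rho (m - n) a b = rho m a b - rho n a b.
Proof. by rewrite rhoD rhoN. Qed.
Lemma rho_sum (I : Type) (r : seq I) (F : I -> E) a b :
  rho (\sum_(i <- r) F i) a b = \sum_(i <- r) rho (F i) a b.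
Proof. elim: r => [|i r IH]; by rewrite ?big_nil ?rho0 ?big_cons ?rhoD ?IH. Qed.
Lemma rho_le m a b : rho m a b != 0 -> le a b.
Proof. by case: Hc => _ H _ _ _; apply: H. Qed.
Lemma rho_nle m a b : ~~ le a b -> rho m a b = 0.
Proof. by move=> H; apply/eqP; apply: contraNT H; apply: rho_le. Qed.
Lemma coas m a b c d : le a b -> le c d ->
  rho (rho m c d) a b = if b == c then rho m a d else 0.
Proof. by case: Hc => _ _ _ _ H; apply: H. Qed.
Lemma counit m : exists s : seq X,
  [/\ uniq s, (forall a, rho m a a != 0 -> a \in s) & m = \sum_(a <- s) rho m a a].
Proof. by case: Hc => _ _ _ H _; apply: H. Qed.
Lemma supp m : exists S : seq (X * X), forall a b, rho m a b != 0 -> (a, b) \in S.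
Proof. by case: Hc => _ _ H _ _; apply: H. Qed.

Lemma min_ex (Q : pred X) (T : seq X) : (forall c, Q c -> c \in T) ->
  forall n c, (count (fun d => Q d && le d c) T <= n)%N -> Q c ->
  exists c0, Q c0 /\ forall c', Q c' -> le c' c0 -> le c0 c'.
Proof.
move=> HT; elim=> [|n IH] c Hn Qc.
  have : (0 < count (fun d => Q d && le d c) T)%N.
    by rewrite -has_count; apply/hasP; exists c; [apply: HT|rewrite Qc leR].
  by rewrite lt0n; move: Hn; rewrite leqn0 => ->.
have [H|H] := pselect (forall c', Q c' -> le c' c -> le c c'); first by exists c.
move: H => /existsNP[c' /not_implyP[Qc' /not_implyP[c'c /negP ncc']]].
apply: (IH c') => //; rewrite -ltnS; apply: leq_trans Hn.
apply: (count_lt (y := c)) => //=.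
- by move=> d /andP[-> dc']; rewrite (leT dc' c'c).
- exact: HT.
- by rewrite Qc leR.
- by rewrite negb_and ncc' orbT.
Qed.

Lemma step1 (m : E) : m != 0 -> exists x s,
  [/\ s != 0, rho s x x = s & forall c, rho s c x != 0 -> le x c].
Proof.
move=> m0; have [s [_ _ ms]] := counit m.
have [a ma] : exists a, rho m a a != 0.
  apply/not_existsP => H; move: m0; rewrite {1}ms big1 ?eqxx // => a _.
  by apply/eqP; apply/negPn/negP; apply: H.
have [S HS] := supp m.
pose Q := fun c => rho m c a != 0.
have HT : forall c, Q c -> c \in [seq p.1 | p <- S].
  by move=> c /HS H; apply/mapP; exists (c, a).
have [c [Qc Hmin]] := min_ex HT (leqnn _) ma.
have ca : le c a := rho_le Qc.
exists c, (rho m c a); split => //.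
  by rewrite coas ?leR // eqxx.
move=> c' H; have c'c := rho_le H.
move: H; rewrite coas ?eqxx // => H; exact: Hmin.
Qed.
End Main.

Section Functional.
Local Open Scope classical_set_scope.
Variables (k : fieldType) (E : lmodType k) (s : E).
Hypothesis s0 : s != 0.

Definition goodW (W : set E) : Prop :=
  (forall (c : k) u v, W u -> W v -> W (c *: u + v)) /\ ~ W s.

Lemma maxW : exists W, goodW W /\ forall B, W `<` B -> ~ goodW B.
Proof.
apply: Zorn_bigcup => F FP Ftot; split.
- move=> c u v [X1 FX1 uX1] [X2 FX2 vX2].
  have [X12|X21] := Ftot _ _ FX1 FX2.
  + exists X2 => //; apply: (FP _ FX2).1 => //; exact: X12.
  + exists X1 => //; apply: (FP _ FX1).1 => //; exact: X21.
- by move=> [X1 FX1 sX1]; apply: (FP _ FX1).2.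
Qed.

Lemma functional : exists lam : E -> k,
  (forall c m n, lam (c *: m + n) = c * lam m + lam n) /\ lam s = 1.
Proof.
have [W [[Wcl Ws] Wmax]] := maxW.
have WZ : forall c u, W u -> W 0 -> W (c *: u).
  by move=> c u Wu W0; rewrite -[c *: u]addr0; apply: Wcl.
have W0 : W 0.
  apply: contrapT => nW0; apply: (Wmax (fun w => W w \/ w = 0)).
    split; first by move=> w Ww; left.
    move=> /(_ 0 (or_intror erefl)); exact: nW0.
  split; last by case=> // s0'; move: s0; rewrite s0' eqxx.
  move=> c u v [Wu|->] [Wv|->].
  - by left; apply: Wcl.
  - left; have -> : c *: u + 0 = (c - 1) *: u + u by rewrite scalerBl scale1r subrK addr0.
    exact: Wcl.
  - by left; rewrite scaler0 add0r.
  - by right; rewrite scaler0 addr0.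
have WZ' c u : W u -> W (c *: u) by move=> Wu; apply: WZ.
have WB u v : W u -> W v -> W (u - v).
  by move=> Wu Wv; rewrite addrC -scaleN1r; apply: Wcl.
have ex m : exists c : k, W (m - c *: s).
  have [Wm|nWm] := pselect (W m); first by exists 0; rewrite scale0r subr0.
  pose B := fun w => exists u d, W u /\ w = u + d *: m.
  have WB' : W `<` B.
    split; first by move=> w Ww; exists w, 0; rewrite scale0r addr0.
    move=> /(_ m) H; apply: nWm; apply: H; exists 0, 1; by rewrite add0r scale1r.
  have : ~ goodW B := Wmax _ WB'.
  have Bcl : forall (c : k) u v, B u -> B v -> B (c *: u + v).
    move=> c _ _ [u1 [d1 [Wu1 ->]]] [u2 [d2 [Wu2 ->]]].
    exists (c *: u1 + u2), (c * d1 + d2); split; first exact: Wcl.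
    by rewrite scalerDr scalerA scalerDl addrACA.
  move=> /not_andP[//|/contrapT [u [d [Wu sE]]]].
  have d0 : d != 0.
    apply/eqP => d0; move: sE; rewrite d0 scale0r addr0 => sE; apply: Ws; by rewrite sE.
  exists d^-1; have -> : m - d^-1 *: s = - d^-1 *: u.
    by rewrite sE scalerDr scalerA mulVf // scale1r opprD addrA addrC addrA addNr add0r scaleNr.
  exact: WZ'.
have uniq_c m c c' : W (m - c *: s) -> W (m - c' *: s) -> c = c'.
  move=> H1 H2; have := WB _ _ H2 H1.
  have -> : m - c' *: s - (m - c *: s) = (c - c') *: s.
    by rewrite opprB addrA scalerBl addrAC [m - _ - m]addrAC subrr add0r addrC.
  move=> H; apply/eqP; rewrite -subr_eq0.
  apply/negPn/negP => nz; apply: Ws.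
  by have := WZ' (c - c')^-1 _ H; rewrite scalerA mulVf // scale1r.
pose lam m := projT1 (cid (ex m)).
have lamP m : W (m - lam m *: s) by rewrite /lam; case: cid.
exists lam; split.
- move=> c m n; apply: (uniq_c (c *: m + n)); first exact: lamP.
  have := Wcl c _ _ (lamP m) (lamP n).
  by rewrite scalerDr scalerN scalerA addrACA -opprD -scalerDl.
- by apply: (uniq_c s); [exact: lamP| rewrite scale1r subrr].
Qed.
End Functional.

Lemma lin0 (k : fieldType) (A B : lmodType k) (F : A -> B) :
  (forall c m n, F (c *: m + n) = c *: F m + F n) -> F 0 = 0.
Proof.
move=> H; have := H 1 0 0; rewrite !scale1r addr0 => H'.
by apply: (@addrI _ (F 0)); rewrite addr0 -H'.
Qed.
Lemma linZ (k : fieldType) (A B : lmodType k) (F : A -> B) :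
  (forall c m n, F (c *: m + n) = c *: F m + F n) -> forall c m, F (c *: m) = c *: F m.
Proof. by move=> H c m; have := H c m 0; rewrite (lin0 H) !addr0. Qed.
Lemma linD (k : fieldType) (A B : lmodType k) (F : A -> B) :
  (forall c m n, F (c *: m + n) = c *: F m + F n) -> forall m n, F (m + n) = F m + F n.
Proof. by move=> H m n; have := H 1 m n; rewrite !scale1r. Qed.
Lemma linB (k : fieldType) (A B : lmodType k) (F : A -> B) :
  (forall c m n, F (c *: m + n) = c *: F m + F n) -> forall m n, F (m - n) = F m - F n.
Proof.
move=> H m n; rewrite (linD H) -scaleN1r (linZ H) scaleN1r //.
Qed.

Section Construct.
Variables (k : fieldType) (X : eqType) (le : rel X).
Hypotheses (leR : reflexive le) (leT : transitive le) (lf : locally_finite le).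
Variables (E : lmodType k) (rho : E -> X -> X -> E).
Hypotheses (Hc : is_right_comodule le rho) (Hinj : injective_comodule le rho)
  (Hind : indecomposable_comodule rho).
Variables (x : X) (s : E) (L : seq X).
Hypotheses (Hs0 : s != 0) (Hss : rho s x x = s)
  (Hsoc : forall c, rho s c x != 0 -> le x c)
  (HL : forall c, rho s c x != 0 -> c \in L) (uL : uniq L).

Definition Pb := fun v => le x v.
Definition Pc := fun v => le x v /\ le v x.
Lemma Pb_conv a b : Pb b -> le x a -> le a b -> Pb a. Proof. by []. Qed.
Lemma Pc_conv a b : Pc b -> le x a -> le a b -> Pc a.
Proof. by move=> [_ bx] xa ab; split => //; apply: leT bx. Qed.
Lemma Pb_x v : Pb v -> le x v. Proof. by []. Qed.
Lemma Pc_x v : Pc v -> le x v. Proof. by case. Qed.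

Local Notation MB := (FS k Pb).
Local Notation MC := (FS k Pc).
Definition rhoMB := @rhoF k X le x Pb Pb_conv.
Definition rhoMC := @rhoF k X le x Pc Pc_conv.

Lemma f_in (m : MC) : val m \in @fsp k X Pb.
Proof.
rewrite inE; have [S HS] := FS_support m; exists S => v /HS [[xv _] vS]; by split.
Qed.
Definition fmap (m : MC) : MB := MkFS (f_in m).

Lemma f_morph : comod_morph rhoMC rhoMB fmap.
Proof. by split=> *; apply: val_inj. Qed.
Lemma f_inj : injective fmap.
Proof. move=> m m' H; apply: val_inj; exact: (congr1 val H). Qed.

Definition gmap (m : MC) : E := \sum_(c <- L) val m c *: rho s c x.

Lemma sab a b : le a b -> le b x -> rho (rho s b x) a b = rho s a x.
Proof. by move=> ab bx; rewrite (coas Hc) // eqxx. Qed.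

Lemma g_morph : comod_morph rhoMC rho gmap.
Proof.
split.
- move=> c m n; rewrite /gmap scaler_sumr -big_split; apply: eq_bigr => d _.
  by rewrite FSvalD FSvalZ fctD fctZ scalerDl scalerA.
- move=> m a b; rewrite /gmap (rho_sum Hc).
  have [ab|nab] := boolP (le a b); last first.
    rewrite [LHS]big1 => [|d _]; last by rewrite rhoF_val (negbTE nab) !andbF scale0r.
    by rewrite big1 // => d _; rewrite (rhoZ Hc) (rho_nle Hc) // scaler0.
  transitivity (\sum_(d <- L) (if d == a then (if le x a then val m b *: rho s a x else 0) else 0)).
    apply: eq_bigr => d _; rewrite rhoF_val ab andbT.
    by case: (d =P a) => [->|] //=; case: (le x a); rewrite ?scale0r.
  transitivity (\sum_(d <- L) (if d == b then val m b *: rho s a x else 0)); last first.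
    apply: eq_bigr => d _; rewrite (rhoZ Hc).
    have [->|db] := (d =P b).
      have [mb0|mb] := eqVneq (val m b) 0; first by rewrite mb0 !scale0r.
      have [S HS] := FS_support m; have [[_ bx] _] := HS b mb.
      by rewrite ?eqxx sab.
    have [dx|ndx] := boolP (le d x).
      by rewrite (coas Hc) //; case: (b =P d) db => [->|] //= _ _; rewrite scaler0; case: (d =P b).
    by rewrite (@rho_nle _ _ _ _ _ Hc s _ _ ndx) (rho0 Hc) scaler0; case: (d =P b).
  rewrite !sum_delta //.
  set V := val m b *: rho s a x.
  have [V0|V0] := eqVneq V 0; first by rewrite V0 !if_same.
  move: (V0); rewrite /V scaler_eq0 negb_or => /andP[mb sax].
  rewrite (HL sax) (Hsoc sax).
  have [S HS] := FS_support m; have [[_ bx] _] := HS b mb.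
  have -> // : b \in L.
  apply: contraNT sax => nbL; rewrite -(sab ab bx).
  have -> : rho s b x = 0 by apply/eqP; apply: contraNT nbL; apply: HL.
  by rewrite (rho0 Hc).
Qed.



Lemma dlt_in (P : X -> Prop) : P x -> (fun w => if w == x then 1 else 0 : k^o) \in @fsp k X P.
Proof.
move=> Px; rewrite inE; exists [:: x] => w; case: (w =P x) => [->|_]; first by rewrite mem_seq1.
by rewrite eqxx.
Qed.
Lemma Pbx : Pb x. Proof. exact: leR. Qed.
Lemma Pcx : Pc x. Proof. by split; apply: leR. Qed.
Definition dB : MB := MkFS (dlt_in Pbx).
Definition dC : MC := MkFS (dlt_in Pcx).

Lemma g_dC : gmap dC = s.
Proof.
rewrite /gmap; transitivity (\sum_(c <- L) (if c == x then rho s c x else 0)).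
  by apply: eq_bigr => c _; rewrite /= ; case: (c =P x); rewrite ?scale1r ?scale0r.
rewrite sum_delta // Hss; have -> // : x \in L by apply: HL; rewrite Hss.
Qed.

Section WithH.
Variables (h : MB -> E) (Hh : comod_morph rhoMB rho h) (Hhfg : forall m, h (fmap m) = gmap m).
Variables (lam : E -> k) (Hlam : forall c m n, lam (c *: m + n) = c * lam m + lam n)
  (Hlam1 : lam s = 1).

Lemma h_dB : h dB = s.
Proof. by rewrite -g_dC -Hhfg; congr h; apply: val_inj. Qed.

Lemma lam0 : lam 0 = 0.
Proof.
have := Hlam 1 0 0; rewrite scale1r addr0 mul1r => H.
by apply: (@addrI _ (lam 0)); rewrite addr0 -H.
Qed.

Lemma r_in (m : E) : (fun v => if le x v then lam (rho m x v) else 0 : k^o) \in @fsp k X Pb.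
Proof.
rewrite inE; have [S HS] := supp Hc m; exists [seq p.2 | p <- S] => v.
case: ifP => [xv H|_]; last by rewrite eqxx.
split; first exact: xv.
apply/mapP; exists (x, v) => //; apply: HS.
by apply: contraNneq H => ->; rewrite lam0.
Qed.
Definition rmap (m : E) : MB := MkFS (r_in m).

Lemma r_val m v : val (rmap m) v = if le x v then lam (rho m x v) else 0.
Proof. by []. Qed.

Lemma r_morph : comod_morph rho rhoMB rmap.
Proof.
split.
- move=> c m n; apply: val_inj; apply/funext => v.
  rewrite FSvalD FSvalZ fctD fctZ !r_val.
  by case: ifP; rewrite ?mulr0 ?addr0 // => _; rewrite (rhoDZ Hc) Hlam.
- move=> m a b; apply: val_inj; apply/funext => v.
  rewrite rhoF_val !r_val.
  have [ab|nab] := boolP (le a b); last first.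
    by rewrite (@rho_nle _ _ _ _ _ Hc m _ _ nab) (rho0 Hc) lam0 !andbF !if_same.
  rewrite andbT; case xv: (le x v).
    rewrite (coas Hc) //; have [va|nva] := eqVneq v a.
      by subst v; rewrite ?eqxx /= xv (leT xv ab).
    by rewrite lam0.
  have [va|nva] := eqVneq v a; last by [].
  by subst v; rewrite xv andbF.
Qed.

Lemma h_lin : forall c m n, h (c *: m + n) = c *: h m + h n.
Proof. by case: Hh. Qed.

Lemma rh (m : MB) : rmap (h m) = m.
Proof.
apply: val_inj; apply/funext => v; rewrite r_val.
case: ifP => xv; last first.
  apply/esym/eqP; apply: contraFT xv => H.
  by have [S HS] := FS_support m; have [] := HS v H.
have : rhoMB m x v = (val m v : k) *: (dB : MB).
  apply: val_inj; apply/funext => w; rewrite rhoF_val FSvalZ fctZ /= leR xv andbT.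
  by case: (w =P x); rewrite ?mulr1 ?mulr0.
move=> H; case: Hh => _ Hr; rewrite -Hr H (linZ h_lin) h_dB.
by rewrite -[_ *: s]addr0 Hlam Hlam1 lam0 mulr1 addr0.
Qed.

Lemma r_s : rmap s = dB.
Proof.
apply: val_inj; apply/funext => v; rewrite r_val /=.
case: ifP => xv.
  rewrite -{1}Hss (coas Hc) ?leR //; case: (v =P x) => _; by rewrite ?Hss ?lam0.
by case: (v =P x) => // vx; move: xv; rewrite vx leR.
Qed.

Lemma hr_id (m : E) : h (rmap m) = m.
Proof.
case: Hind => _ /(_ (fun m => h (rmap m) = m) (fun m => h (rmap m) = 0)).
have hr_lin : forall c m n, h (rmap (c *: m + n)) = c *: h (rmap m) + h (rmap n).
  by move=> c m' n; rewrite (proj1 r_morph) h_lin.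
have hr_rho : forall m a b, h (rmap (rho m a b)) = rho (h (rmap m)) a b.
  by move=> m' a b; rewrite (proj2 r_morph) (proj2 Hh).
case.
- split; first by rewrite (lin0 hr_lin).
  + by move=> c u v Hu Hv; rewrite hr_lin Hu Hv.
  + by move=> u a b Hu; rewrite hr_rho Hu.
- split; first by rewrite (lin0 hr_lin).
  + by move=> c u v Hu Hv; rewrite hr_lin Hu Hv scaler0 addr0.
  + by move=> u a b Hu; rewrite hr_rho Hu (rho0 Hc).
- move=> u; exists (h (rmap u)), (u - h (rmap u)); split.
  + by rewrite rh.
  + by rewrite (linB hr_lin) rh subrr.
  + by rewrite addrC subrK.
- by move=> u -> .
- by move=> /(_ s); rewrite r_s h_dB => /(_ erefl) s0; move: Hs0; rewrite s0 eqxx.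
- move=> H; apply/eqP; rewrite -subr_eq0; apply/eqP; apply: H.
  by rewrite (linB hr_lin) rh subrr.
Qed.

Lemma final : iso_to_Ex le rho x.
Proof.
exists (fun m u v => if u == x then val (rmap m) v else 0); split.
- move=> c m n u v; case: (u == x); last by rewrite mulr0 addr0.
  by rewrite (proj1 r_morph) FSvalD FSvalZ fctD fctZ.
- move=> m m' H; rewrite -(hr_id m) -(hr_id m'); congr h; apply: val_inj.
  by apply/funext => v; have := congr1 (fun F => F x v) H; rewrite /= eqxx.
- move=> m; have [S HS] := FS_support (rmap m); exists S => u v.
  have [ux|nux] := eqVneq u x; last by rewrite ?eqxx.
  subst u => H; have [xv vS] := HS v H.
  by rewrite ?eqxx /=; move: xv; rewrite /Pb => ->; rewrite vS.
- move=> F [S HS].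
  have b_in : (fun v => F x v : k^o) \in @fsp k X Pb.
    rewrite inE; exists S => v /HS /and3P[_ ? ?]; by split.
  exists (h (MkFS b_in)); apply/funext => u; apply/funext => v; rewrite rh /=.
  have [ux|nux] := eqVneq u x; first by subst u.
  apply/esym/eqP; apply: contraT => /HS /and3P[/eqP ux _ _].
  by rewrite ux eqxx in nux.
- move=> m a b; apply/funext => u; apply/funext => v.
  rewrite /coaction_C (proj2 r_morph) rhoF_val.
  have [ux|nux] := eqVneq u x; first by subst u; case: (v == a).
  by rewrite !if_same.
Qed.

End WithH.
End Construct.

Theorem mainTheorem7 (k : fieldType) (X : eqType) (le : rel X) :
  preorder_rel le -> locally_finite le ->
  forall (E : lmodType k) (rho : E -> X -> X -> E),
    is_right_comodule le rho -> injective_comodule le rho ->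
    indecomposable_comodule rho ->
    exists x : X, iso_to_Ex le rho x.
Proof.
move=> [leR leT] lf E rho Hc Hinj Hind.
have [[m m0] _] := Hind.
have [x [s [Hs0 Hss Hsoc]]] := step1 leR leT Hc m0.
have [S HS] := supp Hc s.
pose L := undup [seq p.1 | p <- S & p.2 == x].
have HL : forall c, rho s c x != 0 -> c \in L.
  move=> c /HS H; rewrite mem_undup; apply/mapP; exists (c, x) => //.
  by rewrite mem_filter eqxx.
have uL : uniq L by apply: undup_uniq.
exists x.
have [h [Hh Hhfg]] := Hinj _ _ _ _
  (FS_comod k leR leT lf (@Pc_conv _ _ leT x) (@Pc_x _ _ x))
  (FS_comod k leR leT lf (@Pb_conv _ le x) (@Pb_x _ _ x))
  (@fmap k X le x) (gmap rho s L)
  (f_morph k leT x) (@f_inj _ _ _ _) (g_morph leT Hc Hsoc HL uL).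
have [lam [Hlam Hlam1]] := functional Hs0.
exact: (final leR leT Hc Hind Hs0 Hss HL uL Hh Hhfg Hlam Hlam1).
Qed.
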